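(* Let $C\ge 2$ be an integer and let $r>0$. Let $B_r(0)=\{\mathbf{h}\in\mathbb{R}^C:\|\mathbf{h}\|_2\le r\}$. Define $$H^*(r,C):=\min_{\mathbf{h}\in B_r(0)} H(\mathrm{softmax}(\mathbf{h})).$$ Then $$H^*(r,C) > \log\left(1+(C-1)\exp\left(-\sqrt{\tfrac{C}{C-1}}\,r\right)\right).$$ In particular, for every $\mathbf{h}\in B_r(0)$, $H(\mathrm{softmax}(\mathbf{h}))>\log\left(1+(C-1)\exp\left(-\sqrt{\tfrac{C}{C-1}}\,r\right)\right)$. *)

(* Defs.v *)
From HB Require Import structures.
From mathcomp Require Import all_boot all_order all_algebra.
From mathcomp Require Import all_classical all_reals.
From mathcomp Require Import sequences exp.
Unset Printing Implicit Defensive.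
Import Order.TTheory GRing.Theory Num.Theory.
Local Open Scope ring_scope.
Local Open Scope classical_set_scope.

Definition norm2 {R : realType} (C : nat) (h : 'I_C -> R) : R :=
  Num.sqrt (\sum_(i < C) h i ^+ 2).

Definition ball0 {R : realType} (C : nat) (r : R) : set ('I_C -> R) :=
  [set h | norm2 C h <= r].

Definition softmax {R : realType} (C : nat) (h : 'I_C -> R) : 'I_C -> R :=
  fun i => expR (h i) / \sum_(j < C) expR (h j).

Definition entropy {R : realType} (C : nat) (p : 'I_C -> R) : R :=
  - \sum_(i < C) p i * ln (p i).

(* H^*(r,C) := min over B_r(0) of H(softmax h); the min is attained by
   compactness, so it coincides with the infimum, which we use here. *)
Definition Hstar {R : realType} (C : nat) (r : R) : R :=
  inf [set entropy C (softmax C h) | h in ball0 C r].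

(* Main.v *)
Require Import Defs.
From HB Require Import structures.
From mathcomp Require Import all_boot all_order all_algebra.
From mathcomp Require Import all_classical all_reals.
From mathcomp Require Import sequences exp.
From mathcomp Require Import ring lra.
Import Order.TTheory GRing.Theory Num.Theory.
Local Open Scope ring_scope.

Lemma qm (R : realType) (I : finType) (A : {pred I}) (x : I -> R) :
  (\sum_(i in A) x i) ^+ 2 <= #|A|%:R * \sum_(i in A) x i ^+ 2.
Proof.
set n : R := #|A|%:R; set t := \sum_(i in A) x i; set q := \sum_(i in A) x i ^+ 2.
have hn : 0 <= n by rewrite /n ler0n.
have E : \sum_(i in A) (n * x i - t) ^+ 2 = n * (n * q - t ^+ 2).
  rewrite (eq_bigr (fun i => n ^+ 2 * x i ^+ 2 - (2 * n * t) * x i + t ^+ 2)); last first.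
    by move=> i _; rewrite sqrrB; ring.
  rewrite big_split sumrB /= -!mulr_sumr sumr_const -/q -/t -/n.
  rewrite -mulr_natr. ring.
have H0 : 0 <= n * (n * q - t ^+ 2) by rewrite -E sumr_ge0 // => i _; rewrite sqr_ge0.
have [n0|npos] := eqVneq n 0.
  have : #|A| = 0%N by apply/eqP; rewrite -(eqr_nat R) -/n n0.
  move=> /card0_eq A0.
  rewrite /t /n big_pred0; last by move=> i; rewrite A0.
  rewrite expr0n /= mulr_ge0 ?ler0n ?sumr_ge0 // => i _; exact: sqr_ge0.
have hn' : 0 < n by rewrite lt_neqAle eq_sym npos hn.
rewrite pmulr_rge0 // subr_ge0 in H0.
by [].
Qed.

Lemma key (R : realType) (C : nat) (r : R) (hC : (2 <= C)%N) (hr : 0 < r)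
  (h : 'I_C -> R) (hb : ball0 C r h) (n s b q D : R)
  (En : n = C%:R) (Es : s = Num.sqrt (n / (n - 1)))
  (Eb : b = 1 + (n - 1) * expR (- (s * r))) (Eq : q = (1 + b / n) / 2)
  (ED : D = - ln q) :
  ln b + Num.min (ln (n * q) - ln b) (expR (- (2 * r)) * D / n)
  <= entropy C (softmax C h).
Proof.
have hn2 : 2 <= n by rewrite En (ler_nat R 2 C).
have hn1 : 0 < n - 1 by lra.
have hs2 : s ^+ 2 = n / (n - 1) by rewrite Es sqr_sqrtr // divr_ge0 //; lra.
have hs : 0 < s by rewrite Es sqrtr_gt0 divr_gt0 //; lra.
set e := expR (- (s * r)) in Eb.
have he0 : 0 < e by rewrite expR_gt0.
have he1 : e < 1 by rewrite expR_lt1 oppr_lt0 mulr_gt0.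
have hb1 : 1 <= b by rewrite Eb lerDl mulr_ge0 //; lra.
have hbn : b < n by rewrite Eb; nra.
have hq0 : b / n < q.
  rewrite Eq; have : b / n < 1 by rewrite ltr_pdivrMr; lra. lra.
have hq1 : q < 1.
  rewrite Eq; have : b / n < 1 by rewrite ltr_pdivrMr; lra. lra.
have hqp : 0 < q by apply: le_lt_trans hq0; rewrite divr_ge0 //; lra.
have hnq : b < n * q by rewrite -ltr_pdivrMl; lra.
have hD : 0 < D by rewrite ED oppr_gt0 ln_lt0 // hqp hq1.

have i0 : 'I_C := Ordinal (leq_trans (isT : (0 < 2)%N) hC).
have [k Hk] : exists k, forall i, h i <= h k.
  by case: (@arg_maxP _ _ _ i0 xpredT h isT) => k _ Hk; exists k => i; exact: Hk.
have [j Hj] : exists j, forall i, h j <= h i.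
  by case: (@arg_minP _ _ _ i0 xpredT h isT) => j _ Hj; exists j => i; exact: Hj.
set M := h k; set m := h j.
set Sq := \sum_(i < C) h i ^+ 2.
have Sq0 : 0 <= Sq by rewrite sumr_ge0 // => i _; rewrite sqr_ge0.
have hSq : Sq <= r ^+ 2.
  move: hb; rewrite /ball0 /norm2 /= -/Sq => hb.
  have := sqr_sqrtr Sq0; have := sqrtr_ge0 Sq; nra.
have habs : forall i, - r <= h i <= r.
  move=> i; have : h i ^+ 2 <= Sq.
    by rewrite /Sq (bigD1 i) //= lerDl sumr_ge0 // => l _; rewrite sqr_ge0.
  move=> hi; apply/andP; split; nra.
set Z := \sum_(i < C) expR (h i).
have hZ : 0 < Z.
  rewrite /Z (bigD1 k) //=; apply: lt_le_trans (expR_gt0 (h k)) _.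
  by rewrite lerDl sumr_ge0 // => i _; rewrite expR_ge0.
set p := softmax C h.
have hp0 : forall i, 0 <= p i by move=> i; rewrite /p /softmax divr_ge0 ?expR_ge0 // ltW.
have Hs1 : \sum_(i < C) p i = 1.
  by rewrite /p /softmax -mulr_suml mulfV // gt_eqF.
have Hent : entropy C p = (ln Z - M) + \sum_(i < C) p i * (M - h i).
  have Hln : forall i, ln (p i) = h i - ln Z.
    by move=> i; rewrite /p /softmax ln_div ?expRK // posrE ?expR_gt0.
  rewrite /entropy (eq_bigr (fun i => p i * h i - ln Z * p i)); last first.
    by move=> i _; rewrite Hln; ring.
  rewrite [X in _ = _ + X](eq_bigr (fun i => M * p i - p i * h i)); last first.
    by move=> i _; ring.
  rewrite !sumrB -!mulr_sumr Hs1; ring.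
set S := \sum_(i < C) expR (h i - M).
have HS : ln Z - M = ln S.
  have -> : S = Z * expR (- M).
    by rewrite /S /Z mulr_suml; apply: eq_bigr => i _; rewrite expRD.
  by rewrite lnM ?expRK // posrE ?expR_gt0.
set A := predC1 k.
have cardA : #|A|%:R = n - 1 :> R.
  rewrite /A cardC1 card_ord En -subn1 natrB //; exact: leq_trans hC.
have HSk : S = 1 + \sum_(i in A) expR (h i - M).
  rewrite /S (bigD1 k) //= subrr expR0; congr (_ + _).
set t := \sum_(i in A) h i.
set mu := (t - (n - 1) * M) / (n - 1).
have hmu : mu * (n - 1) = t - (n - 1) * M by rewrite /mu divfK // gt_eqF.
have Cl1 : (n - 1) * expR mu <= \sum_(i in A) expR (h i - M).
  have Hi : forall i, expR mu * (1 + (h i - M - mu)) <= expR (h i - M).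
    move=> i; have -> : expR (h i - M) = expR mu * expR (h i - M - mu).
      by rewrite -expRD; congr expR; ring.
    by rewrite ler_wpM2l ?expR_ge0 ?expR_ge1Dx.
  apply: le_trans (ler_sum _ (fun i _ => Hi i)).
  rewrite -mulr_sumr (eq_bigr (fun i => h i + (1 - M - mu))); last by move=> i _; ring.
  rewrite big_split /= sumr_const -/t -mulr_natr cardA.
  have -> : t + (1 - M - mu) * (n - 1) = n - 1.
    by rewrite mulrBl hmu; ring.
  by rewrite mulrC.
have qA := @qm R _ A h.
have HSq : Sq = M ^+ 2 + \sum_(i in A) h i ^+ 2.
  by rewrite /Sq (bigD1 k).
have htM : t <= (n - 1) * M.
  rewrite /t -cardA mulr_natl -sumr_const; apply: ler_sum => i _; exact: Hk.
have Cl2 : - (s * r) <= mu.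
  set x := (n - 1) * M - t.
  have hx0 : 0 <= x by rewrite /x subr_ge0.
  rewrite cardA -/t in qA.
  have hx2 : x ^+ 2 <= n * (n - 1) * Sq.
    rewrite HSq /x; set qa := \sum_(i in A) h i ^+ 2 in qA *.
    have : 0 <= (n - 1) * (M + t) ^+ 2 by rewrite mulr_ge0 ?sqr_ge0 //; lra.
    nra.
  have hsn : s ^+ 2 * (n - 1) = n by rewrite hs2 divfK // gt_eqF.
  have hx3 : x ^+ 2 <= ((n - 1) * s * r) ^+ 2.
    apply: le_trans hx2 _.
    have -> : ((n - 1) * s * r) ^+ 2 = n * (n - 1) * r ^+ 2.
      by transitivity ((n - 1) * (s ^+ 2 * (n - 1)) * r ^+ 2); [ring | rewrite hsn; ring].
    by rewrite ler_wpM2l // mulr_ge0 //; lra.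
  have hy : 0 <= (n - 1) * s * r by rewrite !mulr_ge0 //; lra.
  have hxy : x <= (n - 1) * s * r by nra.
  have : - (s * r) * (n - 1) <= mu * (n - 1) by rewrite hmu; rewrite /x in hxy; nra.
  by rewrite ler_pM2r.
have hSb : b <= S.
  rewrite HSk Eb lerD2l; apply: le_trans Cl1.
  by rewrite ler_wpM2l ?ler_expR //; lra.
set G := \sum_(i < C) p i * (M - h i).
have hG : p j * (M - m) <= G.
  rewrite /G (bigD1 j) //= lerDl sumr_ge0 // => i _; rewrite mulr_ge0 // subr_ge0; exact: Hk.
have hpos : forall x : R, 0 < x -> x \in Num.pos by move=> x; rewrite posrE.
have hSpos : 0 < S by apply: lt_le_trans hSb; lra.
have hlnSb : ln b <= ln S by rewrite ler_ln ?hpos //; lra.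
rewrite Hent HS -/G.
have hmM : - (2 * r) <= m - M by have := habs j; have := habs k; rewrite /m /M; lra.
case: (lerP (M - m) D) => hMD.
- have hSn : n * q <= S.
    have -> : n * q = \sum_(i < C) q.
      by rewrite sumr_const card_ord -mulr_natl En.
    apply: ler_sum => i _; rewrite Eq.
    have -> : (1 + b / n) / 2 = expR (- D).
      by rewrite ED opprK lnK // posrE -Eq.
    rewrite ler_expR; have := Hj i; rewrite -/m; lra.
  have hG0 : 0 <= G by apply: le_trans hG; rewrite mulr_ge0 // subr_ge0 Hk.
  have : ln (n * q) <= ln S by rewrite ler_ln ?hpos //; nra.
  have : Num.min (ln (n * q) - ln b) (expR (- (2 * r)) * D / n) <= ln (n * q) - ln b.
    by rewrite ge_min lexx.
  lra.
- have hZn : Z <= n * expR M.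
    have -> : n * expR M = \sum_(i < C) expR M.
      by rewrite sumr_const card_ord -mulr_natl En.
    by apply: ler_sum => i _; rewrite ler_expR Hk.
  have hpj : expR (m - M) <= p j * n.
    have hpZ : p j * Z = expR m by rewrite /p /softmax divfK // gt_eqF.
    have : expR m <= p j * n * expR M.
      by rewrite -hpZ -mulrA ler_wpM2l.
    by move=> H; rewrite -(ler_pM2r (expR_gt0 M)) -expRD subrK.
  have hpj2 : expR (- (2 * r)) / n <= p j.
    rewrite ler_pdivrMr; last lra.
    by apply: le_trans hpj; rewrite ler_expR.
  have : expR (- (2 * r)) * D / n <= p j * (M - m).
    rewrite mulrAC; apply: ler_pM => //.
    - by rewrite divr_ge0 ?expR_ge0 //; lra.
    - lra.
    - lra.
  have : Num.min (ln (n * q) - ln b) (expR (- (2 * r)) * D / n) <= expR (- (2 * r)) * D / n.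
    by rewrite ge_min lexx orbT.
  lra.
Qed.

Lemma dpos (R : realType) (C : nat) (r : R) (hC : (2 <= C)%N) (hr : 0 < r)
  (n s b q D : R)
  (En : n = C%:R) (Es : s = Num.sqrt (n / (n - 1)))
  (Eb : b = 1 + (n - 1) * expR (- (s * r))) (Eq : q = (1 + b / n) / 2)
  (ED : D = - ln q) :
  0 < Num.min (ln (n * q) - ln b) (expR (- (2 * r)) * D / n).
Proof.
have hn2 : 2 <= n by rewrite En (ler_nat R 2 C).
have hn1 : 0 < n - 1 by lra.
have hs : 0 < s by rewrite Es sqrtr_gt0 divr_gt0 //; lra.
set e := expR (- (s * r)) in Eb.
have he0 : 0 < e by rewrite expR_gt0.
have he1 : e < 1 by rewrite expR_lt1 oppr_lt0 mulr_gt0.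
have hb1 : 1 <= b by rewrite Eb lerDl mulr_ge0 //; lra.
have hbn : b < n by rewrite Eb; nra.
have hq0 : b / n < q.
  rewrite Eq; have : b / n < 1 by rewrite ltr_pdivrMr; lra. lra.
have hq1 : q < 1.
  rewrite Eq; have : b / n < 1 by rewrite ltr_pdivrMr; lra. lra.
have hqp : 0 < q by apply: le_lt_trans hq0; rewrite divr_ge0 //; lra.
have hnq : b < n * q by rewrite -ltr_pdivrMl; lra.
have hD : 0 < D by rewrite ED oppr_gt0 ln_lt0 // hqp hq1.
rewrite lt_min; apply/andP; split.
  rewrite subr_gt0 ltr_ln // posrE; lra.
by rewrite divr_gt0 // ?mulr_gt0 ?expR_gt0 //; lra.
Qed.

Local Open Scope classical_set_scope.
Theorem theorem1 (R : realType) (C : nat) (r : R) (hC : (2 <= C)%N) (hr : 0 < r) :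
  let bound := ln (1 + (C%:R - 1) * expR (- (Num.sqrt (C%:R / (C%:R - 1)) * r))) in
  Hstar C r > bound /\
  (forall h : 'I_C -> R, ball0 C r h -> entropy C (softmax C h) > bound).
Proof.
move=> bound.
set n : R := C%:R.
set s := Num.sqrt (n / (n - 1)).
set b := 1 + (n - 1) * expR (- (s * r)).
set q := (1 + b / n) / 2.
set D := - ln q.
have hd := @dpos R C r hC hr n s b q D erefl erefl erefl erefl erefl.
have K := fun h hb => @key R C r hC hr h hb n s b q D erefl erefl erefl erefl erefl.
have Eb : bound = ln b by [].
set d := Num.min _ _ in hd K.
have H2 : forall h : 'I_C -> R, ball0 C r h -> entropy C (softmax C h) > bound.
  by move=> h hb; rewrite Eb; apply: lt_le_trans (K h hb); lra.
split => //.
rewrite Eb; apply: lt_le_trans (_ : ln b + d <= _); first lra.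
apply: lb_le_inf.
  exists (entropy C (softmax C (fun _ => 0))); exists (fun _ => 0) => //.
  rewrite /ball0 /norm2 /= big1 ?sqrtr0; first exact: ltW.
  by move=> i _; rewrite expr0n.
by move=> y [h hb <-]; exact: K.
Qed.
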